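(* Let $\lambda\ge\Delta^{-1/2}$. For every $(p,g)\in\mathcal Z$, \[ \mu_{\min}\,\ell^\Theta_{\mathrm C,\infty}\bigl(p,\mathcal G(p)\bigr)\le d_\lambda\Bigl((p,g),\bigl(h^{(g)}_\mu(p),\bar r^\pi\bigr)\Bigr) \quad\text{and}\quad |g-\bar r^\pi|\le\lambda^{-1}d_\lambda\Bigl((p,g),\bigl(h^{(g)}_\mu(p),\bar r^\pi\bigr)\Bigr), \] where $\mu_{\min}:=\min_i\mu_i$.
   Context: Finite MDP with state set $\mathcal{S}=\{1,\dots,m\}$, finite action set, deterministic rewards in $[0,1]$, fixed policy inducing a transition matrix $P=(P_{ij})$ on $\mathcal S$ that is irreducible and aperiodic with stationary distribution $\mu$. $R_{ij}$ is the finite-valued $[0,1]$-valued random one-step reward conditioned on transition $i\to j$; gain $\bar r^\pi=\sum_i\mu_i\sum_jP_{ij}\mathbb E[R_{ij}]$; $\nu^{(g)}_{ij}:=\mathrm{Law}(R_{ij}-g)$. $\Theta=\{\theta_1<\dots<\theta_d\}$ with constant stride $\Delta>0$; $\Delta_d$ the probability simplex of $\mathbb R^d$; $\Delta_d^{\mathcal S}$ families $(p_i)_{i\in\mathcal S}$, $p_i\in\Delta_d$; $\mathcal Z:=\Delta_d^{\mathcal S}\times[0,1]$. For $u\in\Delta_d$, $\eta^{u,0}:=\sum_ku_k\delta_{\theta_k}$. Categorical projection $\Pi^\Theta_{\mathrm C}$: $\delta_x\mapsto\delta_{\theta_1}$ if $x\le\theta_1$, $\delta_{\theta_d}$ if $x\ge\theta_d$,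 $\frac{\theta_{k+1}-x}{\Delta}\delta_{\theta_k}+\frac{x-\theta_k}{\Delta}\delta_{\theta_{k+1}}$ if $\theta_k\le x\le\theta_{k+1}$, extended linearly to laws. $\mathcal G_g(p)$ is the unique $q\in\Delta_d^{\mathcal S}$ with $\eta^{q_i,0}=\Pi^\Theta_{\mathrm C}(\sum_jP_{ij}(\nu^{(g)}_{ij}\ast\eta^{p_j,0}))$ for all $i$; $\mathcal G:=\mathcal G_{\bar r^\pi}$. $h^{(g)}_\mu(p)_i:=(1-\mu_i)p_i+\mu_i\mathcal G_g(p)_i$. Coordinate Cramér metric: $F_u(\theta_k):=\sum_{j\le k}u_j$, $\ell^\Theta_{\mathrm C}(u,v)^2:=\Delta\sum_{k=1}^{d-1}(F_u(\theta_k)-F_v(\theta_k))^2$, $\ell^\Theta_{\mathrm C,\infty}(p,q):=\max_i\ell^\Theta_{\mathrm C}(p_i,q_i)$; $d_\lambda((p,g),(q,g')):=\ell^\Theta_{\mathrm C,\infty}(p,q)+\lambda|g-g'|$. *)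

(* Defs.v *)
From HB Require Import structures.
From mathcomp Require Import all_boot all_order all_algebra.
From mathcomp Require Import reals.
Set Implicit Arguments. Unset Strict Implicit. Unset Printing Implicit Defensive.
Import Order.TTheory GRing.Theory Num.Theory.
Local Open Scope ring_scope.

Section Defs.
Variable R : realType.

Definition mpow (m : nat) (P : 'I_m -> 'I_m -> R) (n : nat) : 'I_m -> 'I_m -> R :=
  iter n (fun Q i j => \sum_(k < m) Q i k * P k j)
         (fun i j => (i == j)%:R).

Definition stochastic (m : nat) (P : 'I_m -> 'I_m -> R) : Prop :=
  (forall i j, 0 <= P i j) /\ (forall i, \sum_(j < m) P i j = 1).

Definition irreducible (m : nat) (P : 'I_m -> 'I_m -> R) : Prop :=
  forall i j, exists n, 0 < mpow P n i j.

Definition aperiodic (m : nat) (P : 'I_m -> 'I_m -> R) : Prop :=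
  forall i (k : nat), (forall n, 0 < mpow P n i i -> (k %| n)%N) -> k = 1%N.

Definition distribution (T : finType) (u : T -> R) : Prop :=
  (forall k, 0 <= u k) /\ \sum_(k : T) u k = 1.

Definition stationary (m : nat) (P : 'I_m -> 'I_m -> R) (mu : 'I_m -> R) : Prop :=
  distribution mu /\ forall j, \sum_(i < m) mu i * P i j = mu j.

(* ---------- finite-valued rewards ----------
   The law of R_ij is sum_w pr i j w * delta_(rv i j w), w ranging over a finite type. *)
Definition reward_laws (m : nat) (Om : finType)
  (rv pr : 'I_m -> 'I_m -> Om -> R) : Prop :=
  (forall i j w, 0 <= rv i j w <= 1) /\ (forall i j, distribution (pr i j)) .

Definition exp_reward (m : nat) (Om : finType) (rv pr : 'I_m -> 'I_m -> Om -> R)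
  (i j : 'I_m) : R := \sum_(w : Om) pr i j w * rv i j w.

Definition gain (m : nat) (Om : finType) (P : 'I_m -> 'I_m -> R) (mu : 'I_m -> R)
  (rv pr : 'I_m -> 'I_m -> Om -> R) : R :=
  \sum_(i < m) mu i * \sum_(j < m) P i j * exp_reward rv pr i j.

(* 0-indexed: theta k = th1 + k * Del, k : 'I_d *)
Definition theta (th1 Del : R) (d : nat) (k : 'I_d) : R := th1 + k%:R * Del.
Definition theta_last (th1 Del : R) (d : nat) : R := th1 + (d.-1)%:R * Del.

(* Categorical projection of delta_x: the weight it puts on theta_k.
   x <= theta_1 -> delta_theta_1 ; x >= theta_d -> delta_theta_d ;
   theta_k <= x <= theta_(k+1) -> (theta_(k+1)-x)/Del on theta_k and
   (x-theta_k)/Del on theta_(k+1), written as the hat function. *)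
Definition catproj_dirac (th1 Del : R) (d : nat) (x : R) (k : 'I_d) : R :=
  if x <= th1 then ((k : nat) == 0%N)%:R
  else if theta_last th1 Del d <= x then ((k : nat) == d.-1)%:R
  else Num.max 0 (1 - `|x - theta th1 Del k| / Del).

(* G_g(p)_i: coordinates of Pi_C( sum_j P_ij (nu^(g)_ij * eta^{p_j,0}) ).
   nu^(g)_ij * eta^{p_j,0} = sum_w sum_l pr_ij(w) p_j(l) delta_(rv_ij(w) - g + theta_l),
   and Pi_C is extended linearly. *)
Definition Gop (m d : nat) (Om : finType) (th1 Del : R) (P : 'I_m -> 'I_m -> R)
  (rv pr : 'I_m -> 'I_m -> Om -> R) (g : R) (p : 'I_m -> 'I_d -> R) :
  'I_m -> 'I_d -> R :=
  fun i k => \sum_(j < m) P i j *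
     \sum_(w : Om) pr i j w *
       \sum_(l < d) p j l * catproj_dirac th1 Del (rv i j w - g + theta th1 Del l) k.

Definition hop (m d : nat) (Om : finType) (th1 Del : R) (P : 'I_m -> 'I_m -> R)
  (rv pr : 'I_m -> 'I_m -> Om -> R) (mu : 'I_m -> R) (g : R) (p : 'I_m -> 'I_d -> R) :
  'I_m -> 'I_d -> R :=
  fun i k => (1 - mu i) * p i k + mu i * Gop th1 Del P rv pr g p i k.

Definition cdf (d : nat) (u : 'I_d -> R) (k : 'I_d) : R :=
  \sum_(j < d | (j <= k)%N) u j.

Definition cramer (Del : R) (d : nat) (u v : 'I_d -> R) : R :=
  Num.sqrt (Del * \sum_(k < d | (k < d.-1)%N) (cdf u k - cdf v k) ^+ 2).

Definition cramer_inf (Del : R) (m d : nat) (p q : 'I_m -> 'I_d -> R) : R :=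
  \big[Num.max/0]_(i < m) cramer Del (p i) (q i).

Definition d_lambda (Del lam : R) (m d : nat)
  (pg qg' : ('I_m -> 'I_d -> R) * R) : R :=
  cramer_inf Del pg.1 qg'.1 + lam * `|pg.2 - qg'.2|.

(* min_i mu_i (mu takes values in [0,1], so 1 is a neutral default) *)
Definition mu_min (m : nat) (mu : 'I_m -> R) : R := \big[Num.min/1]_(i < m) mu i.

End Defs.

(* Main.v *)
Require Import Defs.
From HB Require Import structures.
From mathcomp Require Import all_boot all_order all_algebra.
From mathcomp Require Import reals.
From mathcomp Require Import lra zify ring.
Import Order.TTheory GRing.Theory Num.Theory.
Local Open Scope ring_scope.

Ltac mmcases :=
  repeat match goal with
  | |- context [Num.max ?a ?b] => case: (lerP a b)
  | |- context [Num.min ?a ?b] => case: (lerP a b)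
  | |- context [`|?x|] =>
      let hx := fresh "hx" in
      have [hx|hx] := lerP 0 x; [rewrite (ger0_norm hx) | rewrite (ltr0_norm hx)]; move: hx
  end; intros.
Section S1.
Variable R : realType.
Definition phi (t : R) : R := Num.min 1 (Num.max 0 t).
Lemma phi_lip a b : `|phi a - phi b| <= `|a - b|.
Proof. rewrite /phi; mmcases; lra. Qed.
Lemma phi_sum n (t : R) :
  \sum_(k < n) phi (k.+1%:R - t) = Num.min n%:R (Num.max 0 (n%:R - t)).
Proof.
elim: n => [|n IH]; first by rewrite big_ord0; mmcases; lra.
rewrite big_ord_recr /= IH /phi.
have hn : (0:R) <= n%:R by rewrite ler0n.
rewrite -natr1 ; mmcases; lra.
Qed.
Lemma phi_sum_abs n (u v : R) :
  \sum_(k < n) `|phi (k.+1%:R - u) - phi (k.+1%:R - v)| <= `|u - v|.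
Proof.
wlog huv : u v / u <= v.
  move=> H; have [h|h] := leP u v; first exact: H h.
  rewrite distrC (eq_bigr (fun k : 'I_n => `|phi (k.+1%:R - v) - phi (k.+1%:R - u)|)).
    by apply: H; apply: ltW.
  by move=> k _; rewrite distrC.
rewrite (eq_bigr (fun k : 'I_n => phi (k.+1%:R - u) - phi (k.+1%:R - v))); last first.
  by move=> k _; rewrite ger0_norm // subr_ge0 /phi; mmcases; lra.
rewrite sumrB !phi_sum.
have hn : (0:R) <= n%:R by rewrite ler0n.
mmcases; lra.
Qed.
Lemma hat_sum (u : R) n : 0 < u ->
  \sum_(j < n.+1) Num.max 0 (1 - `|u - j%:R|) = phi (n.+1%:R - u).
Proof.
move=> hu; elim: n => [|n IH].
  by rewrite big_ord_recr big_ord0 /= add0r /phi; mmcases; lra.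
rewrite big_ord_recr /= IH /phi.
have hn : (0:R) <= n%:R by rewrite ler0n.
rewrite -[n.+2]addn1 -[n.+1]addn1 !natrD; mmcases; lra.
Qed.
Lemma cdf_cat th1 Del d x (k : 'I_d) : 0 < Del -> (k < d.-1)%N ->
  cdf (catproj_dirac th1 Del x) k = phi (k.+1%:R - (x - th1)/Del).
Proof.
move=> hD hk.
have hkd : (k.+1 <= d)%N by have := ltn_ord k; lia.
set F := fun j : nat => if x <= th1 then (j == 0%N)%:R
  else if theta_last th1 Del d <= x then (j == d.-1)%:R
  else Num.max 0 (1 - `|x - (th1 + j%:R * Del)| / Del).
have -> : cdf (catproj_dirac th1 Del x) k = \sum_(j < k.+1) F j.
  by rewrite (big_ord_widen d F hkd).
rewrite /F /theta_last; set u := (x - th1) / Del.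
have hx : x = th1 + u * Del by rewrite /u mulfVK ?gt_eqF //; lra.
have hkr : (k.+1%:R : R) <= (d.-1)%:R by rewrite ler_nat.
have hk1 : (1:R) <= k.+1%:R by rewrite ler1n.
have [h1|h1] := boolP (x <= th1).
  rewrite big_ord_recl /= big1 ?addr0; last by move=> j _.
  have : u <= 0 by rewrite -(pmulr_lle0 _ hD); lra.
  rewrite /phi; mmcases; lra.
have [h2|h2] := boolP (th1 + (d.-1)%:R * Del <= x).
  rewrite big1; last first.
    move=> j _; case: eqP => // hj; exfalso; have := ltn_ord j; lia.
  have : (d.-1)%:R <= u.
    rewrite -subr_ge0 -(pmulr_lge0 _ hD); lra.
  rewrite /phi; mmcases; lra.
have hu : 0 < u.
  rewrite -(pmulr_lgt0 _ hD); move: h1; rewrite -ltNge; lra.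
rewrite -hat_sum //; apply: eq_bigr => j _.
have -> : x - (th1 + j%:R * Del) = (u - j%:R) * Del by rewrite {1}hx; ring.
by rewrite normrM (gtr0_norm hD) mulfK ?gt_eqF.
Qed.
End S1.
Section S2.
Variable R : realType.
Lemma cs_sq (I : finType) (P : pred I) (a b : I -> R) :
  (\sum_(i | P i) a i * b i) ^+ 2 <=
  (\sum_(i | P i) a i ^+ 2) * (\sum_(i | P i) b i ^+ 2).
Proof.
set A := \sum_(i | P i) a i ^+ 2; set B := \sum_(i | P i) b i ^+ 2;
set C := \sum_(i | P i) a i * b i.
have hB : 0 <= B by apply: sumr_ge0 => i _; apply: sqr_ge0.
have [B0|Bpos] := eqVneq B 0.
  have hb := psumr_eq0P (fun i _ => sqr_ge0 (b i)) B0.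
  have -> : C = 0.
    by rewrite /C big1 // => i Pi; move/eqP: (hb i Pi); rewrite sqrf_eq0 => /eqP ->; rewrite mulr0.
  by rewrite B0 expr0n /= mulr0.
have Bp : 0 < B by rewrite lt_neqAle eq_sym Bpos hB.
have key : 0 <= B * (A * B - C ^+ 2).
  have -> : B * (A * B - C ^+ 2) = \sum_(i | P i) (B * a i - C * b i) ^+ 2.
    rewrite (eq_bigr (fun i => B ^+ 2 * a i ^+ 2 - (2 * B * C) * (a i * b i) + C ^+ 2 * b i ^+ 2)); last by move=> i _; ring.
    rewrite big_split sumrB /= -!mulr_sumr -/A -/B -/C; ring.
  by apply: sumr_ge0 => i _; apply: sqr_ge0.
by move: key; rewrite pmulr_rge0 // subr_ge0.
Qed.

Lemma cs (I : finType) (P : pred I) (a b : I -> R) :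
  \sum_(i | P i) a i * b i <=
  Num.sqrt (\sum_(i | P i) a i ^+ 2) * Num.sqrt (\sum_(i | P i) b i ^+ 2).
Proof.
have hA : 0 <= \sum_(i | P i) a i ^+ 2 by apply: sumr_ge0 => i _; apply: sqr_ge0.
rewrite -sqrtrM // -[X in X <= _]/(_) .
apply: (le_trans (ler_norm _)); rewrite -sqrtr_sqr ler_wsqrtr //; exact: cs_sq.
Qed.

Lemma minkowski (I : finType) (P : pred I) (a b : I -> R) :
  Num.sqrt (\sum_(i | P i) (a i + b i) ^+ 2) <=
  Num.sqrt (\sum_(i | P i) a i ^+ 2) + Num.sqrt (\sum_(i | P i) b i ^+ 2).
Proof.
have hA : 0 <= \sum_(i | P i) a i ^+ 2 by apply: sumr_ge0 => i _; apply: sqr_ge0.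
have hB : 0 <= \sum_(i | P i) b i ^+ 2 by apply: sumr_ge0 => i _; apply: sqr_ge0.
have hs : 0 <= Num.sqrt (\sum_(i | P i) a i ^+ 2) + Num.sqrt (\sum_(i | P i) b i ^+ 2).
  by apply: addr_ge0; apply: sqrtr_ge0.
rewrite -(ger0_norm hs) -sqrtr_sqr ler_wsqrtr //.
have -> : \sum_(i | P i) (a i + b i) ^+ 2 =
  \sum_(i | P i) a i ^+ 2 + 2 * \sum_(i | P i) a i * b i + \sum_(i | P i) b i ^+ 2.
  rewrite (eq_bigr (fun i => a i ^+ 2 + 2 * (a i * b i) + b i ^+ 2)); last by move=> i _; ring.
  by rewrite !big_split /= -mulr_sumr.
have := @cs _ P a b.
rewrite sqrrD !sqr_sqrtr //; lra.
Qed.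
End S2.
Section S3.
Variable R : realType.
Variables (m d : nat) (Om : finType) (c : 'I_m -> Om -> 'I_d -> R).
Definition S (f : 'I_m -> Om -> 'I_d -> R) : R :=
  \sum_(j < m) \sum_(w : Om) \sum_(l < d) c j w l * f j w l.
Hypothesis c_ge0 : forall j w l, 0 <= c j w l.
Hypothesis c_sum : S (fun _ _ _ => 1) = 1.

Lemma S_le f g : (forall j w l, f j w l <= g j w l) -> S f <= S g.
Proof.
move=> h; apply: ler_sum => j _; apply: ler_sum => w _; apply: ler_sum => l _.
by apply: ler_wpM2l.
Qed.
Lemma S_abs f : `|S f| <= S (fun j w l => `|f j w l|).
Proof.
apply: (le_trans (ler_norm_sum _ _ _)); apply: ler_sum => j _.
apply: (le_trans (ler_norm_sum _ _ _)); apply: ler_sum => w _.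
apply: (le_trans (ler_norm_sum _ _ _)); apply: ler_sum => l _.
by rewrite normrM ger0_norm.
Qed.
Lemma S_const x : S (fun _ _ _ => x) = x.
Proof.
transitivity (x * S (fun _ _ _ => 1)); last by rewrite c_sum mulr1.
rewrite /S mulr_sumr; apply: eq_bigr => j _; rewrite mulr_sumr; apply: eq_bigr => w _.
rewrite mulr_sumr; apply: eq_bigr => l _; by rewrite mulr1 mulrC.
Qed.
Lemma S_sub f g : S f - S g = S (fun j w l => f j w l - g j w l).
Proof.
rewrite /S -sumrB; apply: eq_bigr => j _; rewrite -sumrB; apply: eq_bigr => w _.
rewrite -sumrB; apply: eq_bigr => l _; by rewrite mulrBr.
Qed.
Lemma S_sumk (I : finType) (Q : pred I) (f : I -> 'I_m -> Om -> 'I_d -> R) :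
  \sum_(k | Q k) S (f k) = S (fun j w l => \sum_(k | Q k) f k j w l).
Proof.
rewrite /S exchange_big; apply: eq_bigr => j _; rewrite exchange_big; apply: eq_bigr => w _.
rewrite exchange_big; apply: eq_bigr => l _; by rewrite mulr_sumr.
Qed.
End S3.
Arguments phi {R}.
Arguments phi_lip {R}.
Arguments phi_sum_abs {R}.
Arguments S {R m d Om}.
Arguments S_le {R m d Om c}.
Arguments S_abs {R m d Om c}.
Arguments S_const {R m d Om c}.
Arguments S_sub {R m d Om c}.
Arguments S_sumk {R m d Om c I}.
Section Main.
Variable R : realType.

Lemma cramerE (Del : R) d (u v : 'I_d -> R) : 0 <= Del ->
  cramer Del u v = Num.sqrt Del *
     Num.sqrt (\sum_(k < d | (k < d.-1)%N) (cdf u k - cdf v k) ^+ 2).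
Proof. by move=> h; rewrite /cramer sqrtrM. Qed.

Lemma cdf_lin d (a b : R) (u v : 'I_d -> R) k :
  cdf (fun k => a * u k + b * v k) k = a * cdf u k + b * cdf v k.
Proof. by rewrite /cdf big_split /= -!mulr_sumr. Qed.

Lemma cdf_Gop m d (Om : finType) th1 Del (P : 'I_m -> 'I_m -> R) rv pr gg
  (p : 'I_m -> 'I_d -> R) i k :
  cdf (Gop th1 Del P rv pr gg p i) k =
  S (fun (j : 'I_m) (w : Om) (l : 'I_d) => P i j * pr i j w * p j l)
    (fun j w l => cdf (catproj_dirac th1 Del (rv i j w - gg + theta th1 Del l)) k).
Proof.
rewrite /cdf -S_sumk; apply: eq_bigr => k' _.
rewrite /Gop /S; apply: eq_bigr => j _; rewrite mulr_sumr; apply: eq_bigr => w _.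
rewrite mulr_sumr mulr_sumr; apply: eq_bigr => l _; by rewrite !mulrA.
Qed.
Lemma shift_bound m d (Om : finType) th1 Del (P : 'I_m -> 'I_m -> R)
  (rv pr : 'I_m -> 'I_m -> Om -> R) (p : 'I_m -> 'I_d -> R) g r i :
  0 < Del -> (forall j, 0 <= P i j) -> \sum_(j < m) P i j = 1 ->
  (forall j, distribution (pr i j)) -> (forall j, distribution (p j)) ->
  \sum_(k < d | (k < d.-1)%N)
     (cdf (Gop th1 Del P rv pr g p i) k - cdf (Gop th1 Del P rv pr r p i) k) ^+ 2
  <= (`|g - r| / Del) ^+ 2.
Proof.
move=> hD P0 P1 prd pd.
set c := fun (j : 'I_m) (w : Om) (l : 'I_d) => P i j * pr i j w * p j l.
have c0 : forall j w l, 0 <= c j w l.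
  move=> j w l; rewrite /c; apply: mulr_ge0; first apply: mulr_ge0.
  - exact: P0.
  - by case: (prd j).
  - by case: (pd j).
have c1 : S c (fun _ _ _ => 1) = 1.
  rewrite /S -[RHS]P1; apply: eq_bigr => j _.
  transitivity (P i j * (\sum_(w : Om) pr i j w * (\sum_(l < d) p j l))).
    rewrite mulr_sumr; apply: eq_bigr => w _; rewrite !mulr_sumr; apply: eq_bigr => l _.
    by rewrite /c mulr1 mulrA.
  rewrite (proj2 (pd j)); under eq_bigr do rewrite mulr1.
  by rewrite (proj2 (prd j)) mulr1.
set sg := `|g - r| / Del.
have sg0 : 0 <= sg by rewrite /sg divr_ge0 // ltW.
set ug := fun j w (l : 'I_d) => (rv i j w - g + theta th1 Del l - th1) / Del.
set ur := fun j w (l : 'I_d) => (rv i j w - r + theta th1 Del l - th1) / Del.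
have dug : forall j w l, `|ug j w l - ur j w l| = sg.
  have hDi : 0 <= Del^-1 by rewrite invr_ge0 ltW.
  move=> j w l; rewrite /ug /ur /sg -mulrBl normrM (ger0_norm hDi).
  by congr (_ * _); rewrite -normrN; congr `|_|; ring.
pose D := fun (k : 'I_d) (j : 'I_m) (w : Om) (l : 'I_d) =>
  cdf (catproj_dirac th1 Del (rv i j w - g + theta th1 Del l)) k -
  cdf (catproj_dirac th1 Del (rv i j w - r + theta th1 Del l)) k.
have DE : forall (k : 'I_d) j w l, (k < d.-1)%N ->
    D k j w l = phi (k.+1%:R - ug j w l) - phi (k.+1%:R - ur j w l).
  by move=> k j w l hk; rewrite /D !cdf_cat.
have E_eq : forall k : 'I_d, cdf (Gop th1 Del P rv pr g p i) k - cdf (Gop th1 Del P rv pr r p i) k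
    = S c (D k).
  by move=> k; rewrite !cdf_Gop S_sub.
have Ek : forall k : 'I_d, (k < d.-1)%N -> `|S c (D k)| <= sg.
  move=> k hk; apply: (le_trans (S_abs c0 _)).
  rewrite -[sg](S_const c1); apply: (S_le c0) => j w l.
  by rewrite DE // -(dug j w l) (le_trans (phi_lip _ _)) // opprB addrC addrA subrK -normrN opprB.
have Esum : \sum_(k < d | (k < d.-1)%N) `|S c (D k)| <= sg.
  apply: (@le_trans _ _ (\sum_(k < d | (k < d.-1)%N) S c (fun j w l => `|D k j w l|))).
    by apply: ler_sum => k _; apply: S_abs.
  rewrite S_sumk -[sg](S_const c1); apply: (S_le c0) => j w l.
  rewrite (eq_bigr (fun k : 'I_d => (fun k : nat =>
      `|phi (k.+1%:R - ug j w l) - phi (k.+1%:R - ur j w l)|) k)); last first.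
    by move=> k hk; rewrite DE.
  rewrite -(big_ord_widen d (fun k : nat =>
      `|phi (k.+1%:R - ug j w l) - phi (k.+1%:R - ur j w l)|)) ?leq_pred //.
  by rewrite -(dug j w l); apply: phi_sum_abs.
under eq_bigr => k _ do rewrite E_eq.
apply: (@le_trans _ _ (\sum_(k < d | (k < d.-1)%N) sg * `|S c (D k)|)).
  apply: ler_sum => k hk; rewrite -(ger0_norm (sqr_ge0 (S c (D k)))) normrX expr2 ler_wpM2r //.
  exact: Ek.
by rewrite -mulr_sumr expr2 ler_wpM2l.
Qed.
Lemma sqrt_scale (I : finType) (Q : pred I) (a : R) (f : I -> R) : 0 <= a ->
  Num.sqrt (\sum_(k | Q k) (a * f k) ^+ 2) = a * Num.sqrt (\sum_(k | Q k) f k ^+ 2).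
Proof.
move=> ha; rewrite -{2}(ger0_norm ha) -sqrtr_sqr -sqrtrM ?sqr_ge0 // mulr_sumr.
by congr Num.sqrt; apply: eq_bigr => k _; rewrite exprMn.
Qed.
End Main.
Arguments sqrt_scale {R I Q}.

Theorem corollary3 (R : realType) (m d : nat) (Om : finType)
  (P : 'I_m -> 'I_m -> R) (mu : 'I_m -> R)
  (rv pr : 'I_m -> 'I_m -> Om -> R) (th1 Del lam : R) :
  stochastic P -> irreducible P -> aperiodic P -> stationary P mu ->
  reward_laws rv pr ->
  0 < Del ->
  (Num.sqrt Del)^-1 <= lam ->
  forall (p : 'I_m -> 'I_d -> R) (g : R),
    (forall i, distribution (p i)) -> 0 <= g <= 1 ->
    let rbar := gain P mu rv pr in
    let D := d_lambda Del lam (p, g) (hop th1 Del P rv pr mu g p, rbar) in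
    mu_min mu * cramer_inf Del p (Gop th1 Del P rv pr rbar p) <= D /\
    `|g - rbar| <= lam^-1 * D.
Proof.
move=> [P0 Psum] _ _ [[mu0 musum] _] [_ prd] hD hlam p g hp hg rbar D.
have sD : 0 < Num.sqrt Del by rewrite sqrtr_gt0.
have lam0 : 0 < lam by apply: lt_le_trans hlam; rewrite invr_gt0.
have cr0 : forall u v : 'I_d -> R, 0 <= cramer Del u v by move=> u v; apply: sqrtr_ge0.
have ci0 : 0 <= cramer_inf Del p (hop th1 Del P rv pr mu g p).
  rewrite /cramer_inf; apply: (big_ind (fun x => 0 <= x)) => //.
  by move=> x y hx hy; rewrite le_max hx.
rewrite /D /d_lambda /=.
split; last first.
  rewrite mulrDr mulrA mulVf ?gt_eqF // mul1r lerDr; apply: mulr_ge0 => //.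
  by rewrite invr_ge0 ltW.
set X := cramer_inf Del p (hop th1 Del P rv pr mu g p) + lam * `|g - rbar|.
have X0 : 0 <= X by rewrite /X addr_ge0 // mulr_ge0 // ltW.
have mm0 : 0 <= mu_min mu.
  rewrite /mu_min; apply: (big_ind (fun x => 0 <= x)) => //.
  by move=> x y hx hy; rewrite le_min hx.
have key : forall i, mu_min mu * cramer Del (p i) (Gop th1 Del P rv pr rbar p i) <= X.
  move=> i.
  have mui1 : mu i <= 1.
    by rewrite -musum (bigD1 i) //= lerDl sumr_ge0.
  have mmi : mu_min mu <= mu i by rewrite /mu_min; apply: bigmin_le.
    apply: le_trans (ler_wpM2r (cr0 _ _) mmi) _.
  rewrite !(@cramerE _ _ _ _ _ (ltW hD)).
  set Ap := cdf (p i); set Ag := cdf (Gop th1 Del P rv pr g p i);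
  set Ar := cdf (Gop th1 Del P rv pr rbar p i).
  have Ah : forall k, cdf (hop th1 Del P rv pr mu g p i) k = (1 - mu i) * Ap k + mu i * Ag k.
    by move=> k; rewrite /hop; apply: cdf_lin.
  have e : mu i * Num.sqrt (\sum_(k < d | (k < d.-1)%N) (Ap k - Ar k) ^+ 2) =
    Num.sqrt (\sum_(k < d | (k < d.-1)%N)
       ((Ap k - cdf (hop th1 Del P rv pr mu g p i) k) + mu i * (Ag k - Ar k)) ^+ 2).
    rewrite -sqrt_scale //.
    by congr Num.sqrt; apply: eq_bigr => k _; rewrite Ah; ring.
  rewrite mulrCA e.
  apply: le_trans (ler_wpM2l (ltW sD) (minkowski _ _ _ _ _)) _.
  rewrite mulrDr /X; apply: lerD.
    rewrite -(@cramerE _ _ _ _ _ (ltW hD)). by rewrite /cramer_inf; apply: (le_bigmax _ (fun j => cramer Del (p j) (hop th1 Del P rv pr mu g p j)) i).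
  have e2 : Num.sqrt (\sum_(k < d | (k < d.-1)%N) (mu i * (Ag k - Ar k)) ^+ 2) =
      mu i * Num.sqrt (\sum_(k < d | (k < d.-1)%N) (Ag k - Ar k) ^+ 2).
    by rewrite sqrt_scale.
  rewrite e2.
  have sb := @shift_bound R m d Om th1 Del P rv pr p g rbar i hD (P0 i) (Psum i) (prd i) hp.
  have sb2 : Num.sqrt (\sum_(k < d | (k < d.-1)%N) (Ag k - Ar k) ^+ 2) <= `|g - rbar| / Del.
    rewrite -(ger0_norm (divr_ge0 (normr_ge0 (g - rbar)) (ltW hD))) -sqrtr_sqr.
    by apply: ler_wsqrtr.
  have hs0 := sqrtr_ge0 (\sum_(k < d | (k < d.-1)%N) (Ag k - Ar k) ^+ 2).
  apply: (@le_trans _ _ (Num.sqrt Del * (`|g - rbar| / Del))).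
    apply: ler_wpM2l; first exact: ltW.
    apply: le_trans sb2; rewrite -[X in _ <= X]mul1r ler_wpM2r //.
  have -> : Num.sqrt Del * (`|g - rbar| / Del) = (Num.sqrt Del)^-1 * `|g - rbar|.
    rewrite -{2}(sqr_sqrtr (ltW hD)) expr2 invfM. by field; rewrite gt_eqF.
  by rewrite ler_wpM2r.
rewrite /cramer_inf; apply: (big_ind (fun y => mu_min mu * y <= X)).
- by rewrite mulr0.
- by move=> x y hx hy; rewrite maxEle; case: ifP.
- by move=> i _; apply: key.
Qed.
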